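(* Let $n\ge 2$ and $m_1,\dots,m_n\ge1$ be integers. For $h=1,\dots,n$ let $$|\mathscr{G}_h\rangle=\tfrac{1}{\sqrt2}\Big(|0\rangle\textstyle\bigotimes_{k=2}^{2m_h}|i^h_k\rangle+s_h\,|1\rangle\bigotimes_{k=2}^{2m_h}|\bar i^h_k\rangle\Big)$$ with $i^h_k\in\{0,1\}$ and $s_h\in\{+1,-1\}$, and suppose that either for every $h$ the string $0i^h_2\cdots i^h_{m_h}$ equals $i^h_{m_h+1}\cdots i^h_{2m_h}$, or for every $h$ it equals $\bar i^h_{m_h+1}\cdots\bar i^h_{2m_h}$. Consider $\bigotimes_{h=1}^n|\mathscr{G}_h\rangle$, perform a projective measurement in the GHZ basis (Bell basis when $n=2$, $m_1=m_2=1$) on the first $m_h$ qubits of each state (ordered by $h$), and let $|\mathcal{G}_a\rangle$ be the outcome and $|\mathcal{G}_b\rangle$ the state into which the remaining qubits (the last $m_h$ qubits of each state, ordered by $h$) collapse. If $s_h=+1$ for all $h$, then $|\mathcal{G}_a\rangle$ and $|\mathcal{G}_b\rangle$ are the same. If $s_h=-1$ for all $h$, then $|\mathcal{G}_a\rangle$ and $|\mathcal{G}_b\rangle$ are the same when $n$ is even and different when $n$ is odd.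
   Context: For a bit $b$, $\bar b=1-b$. For $N\ge 2$ qubits, the GHZ basis is the orthonormal basis $\frac{1}{\sqrt2}\big(|0\,b_2\cdots b_N\rangle\pm|1\,\bar b_2\cdots\bar b_N\rangle\big)$, $b_k\in\{0,1\}$; for $N=2$ it is the Bell basis. ''Same'' means equal as quantum states (up to a global phase). *)

(* Defs.v *)
From mathcomp Require Import all_boot all_order all_algebra all_field.
Set Implicit Arguments. Unset Strict Implicit. Unset Printing Implicit Defensive.
Import Order.TTheory GRing.Theory Num.Theory.
Local Open Scope ring_scope.

(* A (pure, unnormalized) state on N qubits: amplitude of each bit string
   x = x_1 ... x_N (only strings of length N matter). *)
Definition qstate := seq bool -> algC.

Definition ghz (w : seq bool) (sgn : bool) : qstate :=
  fun x => (sqrtC 2)^-1 * ((x == w)%:R + (-1) ^+ sgn * (x == map negb w)%:R).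

Definition is_ghz_basis_vec (N : nat) (g : qstate) : Prop :=
  exists (b : (N.-1).-tuple bool) (sgn : bool), g = ghz (false :: b) sgn.

Definition norm2 (N : nat) (u : qstate) : algC :=
  \sum_(x : N.-tuple bool) `|u x| ^+ 2.

Definition normalize (N : nat) (u : qstate) : qstate :=
  fun x => (sqrtC (norm2 N u))^-1 * u x.

Definition same_state (N : nat) (u v : qstate) : Prop :=
  exists c : algC, `|c| = 1 /\ forall x : N.-tuple bool, u x = c * v x.

(* Amplitude of the product state (tensor_h G_h) when the first m_h qubits of
   state h are given by the h-th block of a (a = concatenation of blocks of
   sizes m_0, ..., m_{n-1}) and the last m_h qubits by the h-th block of c. *)
Definition joint_amp (n : nat) (m : 'I_n -> nat) (G : 'I_n -> qstate)
    (a c : seq bool) : algC :=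
  let sh := [seq m h | h <- enum 'I_n] in
  \prod_(h < n) G h (nth [::] (reshape sh a) h ++ nth [::] (reshape sh c) h).

(* Unnormalized state of the remaining register (last m_h qubits of each
   state, ordered by h) after the measured register (first m_h qubits of
   each state, ordered by h) is projected onto g. *)
Definition post_state (n : nat) (m : 'I_n -> nat) (G : 'I_n -> qstate)
    (g : qstate) : qstate :=
  fun c => \sum_(a : (\sum_(h < n) m h)%N.-tuple bool)
             (g a)^* * joint_amp m G a c.

(* Main.v *)
Require Import Defs.
From mathcomp Require Import all_boot all_order all_algebra all_field.
From mathcomp Require Import ring.
Import Order.TTheory GRing.Theory Num.Theory.
Set Implicit Arguments. Unset Strict Implicit. Unset Printing Implicit Defensive.
Local Open Scope ring_scope.

Definition shp n (m : 'I_n -> nat) := [seq m h | h <- enum 'I_n].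
Definition blk n (m : 'I_n -> nat) (x : seq bool) (h : 'I_n) :=
  nth [::] (reshape (shp m) x) h.

Lemma sumn_shp n (m : 'I_n -> nat) : sumn (shp m) = (\sum_(h < n) m h)%N.
Proof. by rewrite /shp sumnE big_map big_enum. Qed.

Lemma size_blk n (m : 'I_n -> nat) x h :
  size x = (\sum_(h < n) m h)%N -> size (blk m x h) = m h.
Proof.
move=> Hx; have Hl : map size (reshape (shp m) x) = shp m.
  by apply: reshapeKl; rewrite sumn_shp Hx.
have Hh : (h < size (reshape (shp m) x))%N by rewrite size_reshape size_map size_enum_ord.
rewrite /blk -(nth_map [::] 0%N size Hh) Hl /shp.
by rewrite (nth_map h) ?size_enum_ord // nth_ord_enum.
Qed.

Lemma blk_neg n (m : 'I_n -> nat) x h :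
  blk m (map negb x) h = map negb (blk m x h).
Proof. by rewrite /blk !nth_reshape map_take map_drop. Qed.

Lemma blk_inj n (m : 'I_n -> nat) x y :
  size x = (\sum_(h < n) m h)%N -> size y = (\sum_(h < n) m h)%N ->
  (forall h, blk m x h = blk m y h) -> x = y.
Proof.
move=> Hx Hy H.
rewrite -(@reshapeKr _ (shp m) x) ?sumn_shp ?Hx //.
rewrite -(@reshapeKr _ (shp m) y) ?sumn_shp ?Hy //.
congr flatten; apply: (eq_from_nth (x0 := [::])); first by rewrite !size_reshape.
move=> j; rewrite size_reshape size_map size_enum_ord => Hj.
exact: (H (Ordinal Hj)).
Qed.

Lemma prod_blk_eq n (m : 'I_n -> nat) x c :
  size x = (\sum_(h < n) m h)%N -> size c = (\sum_(h < n) m h)%N ->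
  \prod_(h < n) ((blk m c h == blk m x h)%:R : algC) = (c == x)%:R.
Proof.
move=> Hx Hc; case: eqP => [->|Hne].
  by rewrite big1 // => h _; rewrite eqxx.
case: (boolP [exists h, blk m c h != blk m x h]) => [/existsP[h Hh]|/existsPn H];
  last first.
  exfalso; apply: Hne; apply: blk_inj Hc Hx _ => h; exact/eqP/negbNE/H.
by rewrite (bigD1 h) //= (negbTE Hh) mul0r.
Qed.

Lemma ghz_cat u v s y c : size y = size u -> u != map negb u ->
  ghz (u ++ v) s (y ++ c) = (sqrtC 2)^-1 *
    (if y == u then (c == v)%:R
     else if y == map negb u then (-1)^+s * (c == map negb v)%:R else 0).
Proof.
move=> Hy Hu; rewrite /ghz map_cat !eqseq_cat ?size_map //.
case: (y =P u) => [->|_]; first by rewrite (negbTE Hu) /= mulr0 addr0.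
by case: (y == map negb u) => /=; rewrite ?add0r ?mulr0 ?addr0.
Qed.

Definition fe (e : bool) (x : seq bool) := if e then map negb x else x.

Lemma fe_neg e x : fe e (map negb x) = map negb (fe e x).
Proof. by case: e. Qed.

Lemma size_fe e x : size (fe e x) = size x.
Proof. by case: e; rewrite ?size_map. Qed.

Lemma factor (w : seq bool) k s e y c :
  (k <= size w)%N -> take k w != map negb (take k w) ->
  drop k w = fe e (take k w) -> size y = k ->
  (y == take k w) || (y == map negb (take k w)) ->
  ghz w s (y ++ c) = (sqrtC 2)^-1 * (-1) ^+ (s && (y != take k w)) * (c == fe e y)%:R.
Proof.
move=> Hk Hu Hv Hy Hok.
rewrite -{1}(cat_take_drop k w) ghz_cat //; last by rewrite size_take_min Hy; apply/esym/minn_idPl.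
case: eqP Hok => [->|Hne] /= Hok; first by rewrite andbF expr0 mulr1 Hv.
by rewrite Hok andbT Hv (eqP Hok) fe_neg -mulrA.
Qed.

Lemma factor0 (w : seq bool) k s y c :
  (k <= size w)%N -> take k w != map negb (take k w) -> size y = k ->
  ~~ ((y == take k w) || (y == map negb (take k w))) ->
  ghz w s (y ++ c) = 0.
Proof.
move=> Hk Hu Hy Hok.
rewrite -{1}(cat_take_drop k w) ghz_cat //; last by rewrite size_take_min Hy; apply/esym/minn_idPl.
by move: Hok; rewrite negb_or => /andP[/negbTE -> /negbTE ->]; rewrite mulr0.
Qed.

Lemma blk_fe n (m : 'I_n -> nat) e x h : blk m (fe e x) h = fe e (blk m x h).
Proof. by case: e => //=; rewrite blk_neg. Qed.

Lemma Jform n (m : 'I_n -> nat) (W : 'I_n -> seq bool) s e x c :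
  (forall h, m h <= size (W h))%N ->
  (forall h, take (m h) (W h) != map negb (take (m h) (W h))) ->
  (forall h, drop (m h) (W h) = fe e (take (m h) (W h))) ->
  size x = (\sum_(h < n) m h)%N -> size c = (\sum_(h < n) m h)%N ->
  (forall h, (blk m x h == take (m h) (W h)) || (blk m x h == map negb (take (m h) (W h)))) ->
  joint_amp m (fun h => ghz (W h) (s h)) x c =
   (sqrtC 2)^-1 ^+ n * \prod_(h < n) (-1) ^+ (s h && (blk m x h != take (m h) (W h)))
   * (c == fe e x)%:R.
Proof.
move=> Hk Hu Hv Hx Hc Hok; rewrite /joint_amp /=.
rewrite -(prod_blk_eq (m := m)) ?size_fe //.
have -> : (sqrtC 2)^-1 ^+ n = \prod_(h < n) (sqrtC 2)^-1 :> algC.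
  by rewrite prodr_const card_ord.
rewrite -!big_split /=.
apply: eq_bigr => h _; rewrite -/(blk m x h) -/(blk m c h) blk_fe.
by apply: factor; rewrite ?size_blk.
Qed.

Lemma J0 n (m : 'I_n -> nat) (W : 'I_n -> seq bool) s x c h :
  (forall h, m h <= size (W h))%N ->
  (forall h, take (m h) (W h) != map negb (take (m h) (W h))) ->
  size x = (\sum_(h < n) m h)%N ->
  ~~ ((blk m x h == take (m h) (W h)) || (blk m x h == map negb (take (m h) (W h)))) ->
  joint_amp m (fun h => ghz (W h) (s h)) x c = 0.
Proof.
move=> Hk Hu Hx Hok; rewrite /joint_amp /= (bigD1 h) //=.
by rewrite -/(blk m x h) (@factor0 _ (m h)) ?size_blk // mul0r.
Qed.

Lemma ghz_conj w t x : (ghz w t x)^* = ghz w t x.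
Proof.
rewrite /ghz rmorphM fmorphV rmorphD rmorphM rmorphXn rmorphN1 !rmorph_nat.
congr (_^-1 * _); apply: geC0_conj; by rewrite sqrtC_ge0 ler0n.
Qed.

Lemma sum_ind M (w : seq bool) (F : seq bool -> algC) : size w = M ->
  \sum_(a : M.-tuple bool) ((tval a == w)%:R * F a) = F w.
Proof.
move=> Hw; have Hw' : size w == M by rewrite Hw.
pose tw := Tuple Hw'.
rewrite (bigD1 tw) //= eqxx mul1r big1 ?addr0 // => a Ha.
have -> : (tval a == w) = (a == tw) by [].
by rewrite (negbTE Ha) mul0r.
Qed.

Lemma post_eq n (m : 'I_n -> nat) G w t c :
  size w = (\sum_(h < n) m h)%N ->
  post_state m G (ghz w t) c = (sqrtC 2)^-1 *
     (joint_amp m G w c + (-1) ^+ t * joint_amp m G (map negb w) c).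
Proof.
move=> Hw; rewrite /post_state.
under eq_bigr => a _ do rewrite ghz_conj /ghz -mulrA mulrDl -mulrA.
rewrite -mulr_sumr big_split /= -mulr_sumr (sum_ind (fun a => joint_amp m G a c) Hw) (sum_ind (fun a => joint_amp m G a c) (M := (\sum_(h < n) m h)%N)) //.
by rewrite size_map.
Qed.

Lemma sum_ind1 M (w : seq bool) : size w = M ->
  \sum_(a : M.-tuple bool) ((tval a == w)%:R : algC) = 1.
Proof.
move=> Hw; have E := sum_ind (fun _ => (1 : algC)) Hw.
rewrite /= in E; rewrite -[X in _ = X]E.
by apply: eq_bigr => a _; rewrite mulr1.
Qed.

Lemma final M (p g : qstate) w K A B t :
  size w = M -> w != map negb w -> 0 < K -> `|A| = 1 -> `|B| = 1 ->
  (forall x : M.-tuple bool,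
     p x = K * (A * (tval x == w)%:R + B * (tval x == map negb w)%:R)) ->
  g = ghz w t ->
  (same_state M (normalize M p) g <-> B = A * (-1) ^+ t).
Proof.
move=> Hw Hww HK HA HB Hp ->.
have Hw' : size w == M by rewrite Hw.
have Hnw' : size (map negb w) == M by rewrite size_map Hw.
pose tw := Tuple Hw'; pose tnw := Tuple Hnw'.
have Hn : norm2 M p = (K * sqrtC 2) ^+ 2.
  rewrite exprMn sqrtCK /norm2.
  transitivity (\sum_(x : M.-tuple bool) K ^+ 2 *
     ((tval x == w)%:R + (tval x == map negb w)%:R)).
    apply: eq_bigr => x _; rewrite Hp normrM exprMn ger0_norm ?ltW //.
    congr (_ * _); case: (tval x =P w) => [Ex|Ex].
      have -> : (tval x == map negb w) = false.
        by apply: negbTE; rewrite Ex.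
      by rewrite /= ?mulr1n ?mulr0n mulr1 mulr0 !addr0 HA expr1n.
    by case: (tval x == map negb w); rewrite /= ?mulr1n ?mulr0n ?mulr1 ?mulr0 ?add0r ?addr0 ?HB ?expr1n ?normr0 ?expr0n.
  by rewrite -mulr_sumr big_split /= !sum_ind1 ?size_map // mulrC.
have Hsq : sqrtC (norm2 M p) = K * sqrtC 2.
  rewrite Hn sqrCK //; apply: mulr_ge0; [exact: ltW | by rewrite sqrtC_ge0 ler0n].
have Hs2 : sqrtC 2 != 0 :> algC by rewrite sqrtC_eq0 pnatr_eq0.
have HK0 : K != 0 by rewrite gt_eqF.
have Hnorm : forall x : M.-tuple bool, normalize M p x =
   (sqrtC 2)^-1 * (A * (tval x == w)%:R + B * (tval x == map negb w)%:R).
  move=> x; rewrite /normalize Hsq Hp invfM mulrA; congr (_ * _).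
  by rewrite mulrAC mulVf // mul1r.
have Hnw : (map negb w == w) = false by apply: negbTE; rewrite eq_sym.
split.
  case=> c [Hc Hx].
  have h1 := Hx tw; have h2 := Hx tnw.
  rewrite Hnorm /ghz /= eqxx (negbTE Hww) /= ?mulr1n ?mulr0n ?mulr1 ?mulr0 ?addr0 in h1.
  rewrite Hnorm /ghz /= eqxx Hnw /= ?mulr1n ?mulr0n ?mulr1 ?mulr0 ?add0r in h2.
  have eA : A = c.
    by apply: (mulfI (invr_neq0 Hs2)); rewrite h1 mulr1 mulrC.
  apply: (mulfI (invr_neq0 Hs2)); rewrite h2 eA; ring.
move=> EB; exists A; split => // x.
rewrite Hnorm /ghz EB; ring.
Qed.

Lemma neg_eq (y u : seq bool) : (map negb y == u) = (y == map negb u).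
Proof.
by rewrite -(inj_eq (inj_map (can_inj negbK))) (mapK negbK).
Qed.

Lemma neg_ne (y u : seq bool) : u != map negb u ->
  (y == u) || (y == map negb u) -> (map negb y != u) = ~~ (y != u).
Proof.
move=> Hu /orP[/eqP->|/eqP->]; first by rewrite neg_eq (negbTE Hu) eqxx.
by rewrite (mapK negbK) eqxx eq_sym (negbTE Hu).
Qed.

Lemma norm_sign n (f : 'I_n -> nat) : `|\prod_(h < n) ((-1) ^+ f h : algC)| = 1.
Proof. by rewrite normr_prod big1 // => h _; rewrite normrX normrN1 expr1n. Qed.

Lemma m1_ne1 : (-1 : algC) != 1.
Proof. by rewrite -subr_eq0 -opprD oppr_eq0 (_ : 1 + 1 = 2%:R) // pnatr_eq0. Qed.

Lemma sign_sq (t : nat) : ((-1) ^+ t * (-1) ^+ t : algC) = 1.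
Proof. by rewrite -expr2 sqrr_sign. Qed.

Lemma prod_sign_eq n (t : 'I_n -> bool) :
  \prod_(h < n) ((-1) ^+ t h : algC) = \prod_(h < n) (-1) ^+ (~~ t h)
  <-> ~~ odd n.
Proof.
set P1 := \prod_(h < n) _; set P2 := \prod_(h < n) _.
have H11 : P1 * P1 = 1.
  rewrite /P1 -big_split big1 // => h _; exact: sign_sq.
have H12 : P1 * P2 = (-1) ^+ n.
  have -> : (-1) ^+ n = \prod_(h < n) (-1 : algC) by rewrite prodr_const card_ord.
  rewrite /P1 /P2 -big_split /=.
  by apply: eq_bigr => h _; case: (t h); rewrite ?expr0 ?expr1 ?mulr1 ?mul1r.
rewrite -signr_odd in H12.
split.
  move=> E; move: H12; rewrite -E H11; case: (odd n) => //= /eqP.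
  by rewrite expr1 eq_sym (negbTE m1_ne1).
move=> Hodd; move: H12; rewrite (negbTE Hodd) expr0 => H12.
by rewrite -[P2]mul1r -H11 -mulrA H12 mulr1.
Qed.

Theorem corollary1 (n : nat) (m : 'I_n -> nat) (i : 'I_n -> seq bool)
    (s : 'I_n -> bool) :
  (2 <= n)%N ->
  (forall h, 1 <= m h)%N ->
  (forall h, size (i h) = (2 * m h).-1) ->
  ((forall h, take (m h) (false :: i h) = drop (m h) (false :: i h)) \/
   (forall h, take (m h) (false :: i h) = map negb (drop (m h) (false :: i h)))) ->
  forall g : qstate,
  is_ghz_basis_vec (\sum_(h < n) m h) g ->
  norm2 (\sum_(h < n) m h) (post_state m (fun h => ghz (false :: i h) (s h)) g) != 0 ->
  let Gb := normalize (\sum_(h < n) m h)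
              (post_state m (fun h => ghz (false :: i h) (s h)) g) in
  ((forall h, s h = false) -> same_state (\sum_(h < n) m h) Gb g) /\
  ((forall h, s h = true) -> (same_state (\sum_(h < n) m h) Gb g <-> ~~ odd n)).
Proof.
move=> Hn Hm Hsz Hcase g [b [t Eg]] Hnz Gb.
set M := (\sum_(h < n) m h)%N in b Eg Hnz Gb *.
set W := fun h => false :: i h.
set u := fun h => take (m h) (W h).
have HkW : forall h, (m h <= size (W h))%N.
  move=> h; rewrite /W /= Hsz prednK; first by rewrite leq_pmull.
  by rewrite muln_gt0 /= Hm.
have Hu : forall h, u h != map negb (u h).
  move=> h; rewrite /u /W; case: (m h) (Hm h) => // k _ /=.
have [e Hv] : exists e, forall h, drop (m h) (W h) = fe e (u h).
  case: Hcase => H; [exists false | exists true] => h; rewrite /u /fe /= H //.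
  by rewrite (mapK negbK).
have HM : (0 < M)%N.
  have H0 : (0 < n)%N by apply: leq_trans Hn.
  rewrite /M (bigD1 (Ordinal H0)) //=; exact: leq_trans (Hm _) (leq_addr _ _).
set w := false :: (b : seq bool).
have Hw : size w = M by rewrite /w /= size_tuple (prednK HM).
have Hww : w != map negb w by [].
have Eg' : g = ghz w t by rewrite Eg.
have HW : forall h, take (m h) (W h) != map negb (take (m h) (W h)) := Hu.
case: (boolP [forall h, (blk m w h == u h) || (blk m w h == map negb (u h))])
  => [/forallP Hok | /forallPn [h Hh]]; last first.
  exfalso; move: Hnz; rewrite Eg' /norm2 big1 ?eqxx // => x _.
  rewrite post_eq // (@J0 n m W s w x h) //.
  rewrite (@J0 n m W s (map negb w) x h) ?size_map //.
    by rewrite !mulr0 addr0 mulr0 normr0 expr0n.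
  by rewrite blk_neg !neg_eq (mapK negbK) orbC.
have Hokn : forall h, (blk m (map negb w) h == u h) || (blk m (map negb w) h == map negb (u h)).
  by move=> h; rewrite blk_neg !neg_eq (mapK negbK) orbC.
have Hne : forall h, (blk m (map negb w) h != u h) = ~~ (blk m w h != u h).
  by move=> h; rewrite blk_neg neg_ne.
set P1 := \prod_(h < n) ((-1) ^+ (s h && (blk m w h != u h)) : algC).
set P2 := \prod_(h < n) ((-1) ^+ (s h && ~~ (blk m w h != u h)) : algC).
set r := (sqrtC 2)^-1 : algC.
set T := (-1) ^+ t : algC.
have Hpost : forall x : M.-tuple bool,
  post_state m (fun h => ghz (W h) (s h)) g x =
  r ^+ n.+1 * (P1 * (tval x == fe e w)%:R + T * P2 * (tval x == fe e (map negb w))%:R).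
  move=> x; rewrite Eg' post_eq //.
  rewrite (@Jform n m W s e w x HkW HW Hv Hw (size_tuple x) Hok).
  rewrite (@Jform n m W s e (map negb w) x HkW HW Hv) ?size_map ?Hw ?size_tuple //.
  have -> : \prod_(h < n) (-1) ^+ (s h && (blk m (map negb w) h != take (m h) (W h))) = P2.
    by apply: eq_bigr => h _; rewrite -/(u h) Hne.
  rewrite -/P1 -/r -/T exprS; ring.
have Kpos : 0 < r ^+ n.+1.
  by apply: exprn_gt0; rewrite invr_gt0 sqrtC_gt0 ltr0n.
have Hfin : same_state M Gb g <-> (if e then P1 = T * P2 * T else T * P2 = P1 * T).
  case: e Hv Hpost => Hv Hpost.
    apply: (@final M _ g w (r ^+ n.+1) (T * P2) P1 t Hw Hww Kpos) => //.
    - by rewrite normrM normrX normrN1 expr1n mul1r norm_sign.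
    - by rewrite norm_sign.
    - move=> y; rewrite Hpost /= (mapK negbK); ring.
  apply: (@final M _ g w (r ^+ n.+1) P1 (T * P2) t Hw Hww Kpos) => //.
  - by rewrite norm_sign.
  - by rewrite normrM normrX normrN1 expr1n mul1r norm_sign.
have HT : T * T = 1 by rewrite /T sign_sq.
have HT0 : T != 0 by rewrite /T signr_eq0.
have Hred : same_state M Gb g <-> P1 = P2.
  rewrite Hfin; clear Hv Hpost; case: e Hfin => _; split => H.
  - by rewrite H mulrAC HT mul1r.
  - by rewrite H mulrAC HT mul1r.
  - by apply: (mulIf HT0); rewrite -H mulrC.
  - by rewrite H mulrC.
split.
  move=> Hs; apply/Hred; rewrite /P1 /P2.
  by rewrite !big1 // => h _; rewrite Hs.
move=> Hs; rewrite Hred /P1 /P2.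
have E1 : forall F : 'I_n -> bool, \prod_(h < n) ((-1) ^+ (s h && F h) : algC) = \prod_(h < n) (-1) ^+ F h.
  by move=> F; apply: eq_bigr => h _; rewrite Hs.
rewrite !E1; exact: prod_sign_eq.
Qed.
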